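(* Let $G$ be an $\alpha_i$-metric graph ($i\ge 0$ an integer). For any vertices $x,y,v$ and any integer $k\in\{0,\dots,d(x,y)\}$, there is a vertex $c\in S_k(x,y)$ such that $d(v,c)\le \max\{d(v,x),d(v,y)\}-\min\{d(x,c),d(y,c)\}+i$ and $d(v,c)\le\max\{d(v,x),d(v,y)\}+i/2$. For an arbitrary vertex $z\in I(x,y)$, we have $d(z,v)\le \max\{d(x,v),d(y,v)\}-\min\{d(x,z),d(y,z)\}+2i+1$ and $d(z,v)\le\max\{d(x,v),d(y,v)\}+3i/2+1$. Furthermore, when $v\in F(z)$, $e(z)\le \max\{e(x),e(y)\}-\min\{d(x,z),d(y,z)\}+2i+1$ and $e(z)\le\max\{e(x),e(y)\}+3i/2+1$.
   Context: All graphs are finite, connected, unweighted, undirected, simple; $d(u,v)$ is the shortest-path distance. $I(u,v)=\{x: d(u,x)+d(x,v)=d(u,v)\}$; the slice is $S_k(u,v)=\{x\in I(u,v): d(u,x)=k\}$. A graph is $\alpha_i$-metric if for all vertices $u,v,w,x$: whenever $v\in I(u,w)$, $w\in I(v,x)$ and $v,w$ are adjacent, then $d(u,x)\ge d(u,v)+d(v,x)-i$. $e(v)=\max_u d(u,v)$ and $F(z)=\{u: d(u,z)=e(z)\}$ is the set of vertices most distant from $z$. *)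

(* Defs.v *)
From mathcomp Require Import all_boot all_order.
Set Implicit Arguments. Unset Strict Implicit. Unset Printing Implicit Defensive.

Section Graph.
Variables (T : finType) (e : rel T).

Definition simple_graph : Prop := symmetric e /\ irreflexive e.

Fixpoint reach (n : nat) (u v : T) : bool :=
  match n with
  | 0 => u == v
  | n'.+1 => reach n' u v || [exists w, e u w && reach n' w v]
  end.

Definition connected_graph : Prop := forall u v : T, exists n, reach n u v.

(* shortest-path distance: least n with reach n u v (for a connected graph
   this is < #|T|, so the search range iota 0 #|T| suffices) *)
Definition dist (u v : T) : nat := find (fun n => reach n u v) (iota 0 #|T|).

Definition interval (u v : T) : {set T} :=
  [set x | dist u x + dist x v == dist u v].

Definition slice (k : nat) (u v : T) : {set T} :=
  [set x in interval u v | dist u x == k].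

(* alpha_i-metric, with the integer inequality
   d(u,x) >= d(u,v) + d(v,x) - i  written as  d(u,v)+d(v,x) <= d(u,x)+i *)
Definition alpha_metric (i : nat) : Prop :=
  forall u v w x : T, v \in interval u w -> w \in interval v x -> e v w ->
    dist u v + dist v x <= dist u x + i.

Definition ecc (v : T) : nat := \max_(u : T) dist u v.

Definition farthest (z : T) : {set T} := [set u | dist u z == ecc z].

End Graph.

(* Main.v *)
Require Import Defs.
From mathcomp Require Import all_boot all_order.
From mathcomp Require Import zify.
From Stdlib Require Import Lia.

Section G.
Set Implicit Arguments. Unset Strict Implicit.
Variables (T : finType) (e : rel T).
Hypothesis esym : symmetric e.
Hypothesis eirr : irreflexive e.
Hypothesis conn : connected_graph e.

Local Notation reach := (reach e).
Local Notation dist := (dist e).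

Lemma reach_mono n u v : reach n u v -> reach n.+1 u v.
Proof. by move=> h /=; rewrite h. Qed.

Lemma reach_monoL m n u v : m <= n -> reach m u v -> reach n u v.
Proof.
move=> le; rewrite -(subnKC le); elim: (n - m) => [|d IH] h; first by rewrite addn0.
rewrite addnS; exact/reach_mono/IH.
Qed.

Lemma reach_trans m n u w v : reach m u w -> reach n w v -> reach (m + n) u v.
Proof.
elim: m u => [|m IH] u; first by move=> /= /eqP->.
rewrite addSn /=.
case/orP => [h1 h2| /existsP [w' /andP [h1 h2]] h3].
  by rewrite (IH u h1 h2).
apply/orP; right; apply/existsP; exists w'; rewrite h1.
exact: IH.
Qed.

Lemma reach1 u v : e u v -> reach 1 u v.
Proof. by move=> h /=; apply/orP; right; apply/existsP; exists v; rewrite h eqxx. Qed.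

Lemma reach_sym n u v : reach n u v -> reach n v u.
Proof.
elim: n u v => [|n IH] u v /=; first by rewrite eq_sym.
case/orP => [h|/existsP [w /andP [h1 h2]]]; first by rewrite IH.
have := reach_trans (IH _ _ h2) (reach1 (_ : e w u)); rewrite addn1; apply.
by rewrite esym.
Qed.

Lemma reach_path n u v : reach n u v -> exists p, path e u p /\ last u p = v.
Proof.
elim: n u => [|n IH] u /=; first by move/eqP->; exists [::].
case/orP=> [/IH //|/existsP [w /andP [h1 /IH [p [hp hl]]]]].
by exists (w :: p); rewrite /= h1 hp.
Qed.

Lemma path_reach u p : path e u p -> reach (size p) u (last u p).
Proof.
elim: p u => [|w p IH] u /=; first by rewrite eqxx.
case/andP=> h1 h2; apply/orP; right; apply/existsP; exists w; rewrite h1.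
exact: IH.
Qed.

Lemma reach_small u v : exists2 n, n < #|T| & reach n u v.
Proof.
have [n h] := conn u v; have [p [hp <-]] := reach_path h.
case: (shortenP hp) => p' hp' uq _.
exists (size p'); last exact: path_reach.
have := max_card (mem (u :: p')); rewrite (card_uniqP uq) /=; done.
Qed.

Lemma dist_spec u v : reach (dist u v) u v /\ dist u v < #|T|.
Proof.
rewrite /Defs.dist; have [n ltn r] := reach_small u v.
have hh : has (fun n => reach n u v) (iota 0 #|T|).
  by apply/hasP; exists n => //; rewrite mem_iota.
have lt := hh; rewrite has_find size_iota in lt; split=> //.
by have := nth_find 0 hh; rewrite nth_iota // add0n.
Qed.

Lemma dist_le n u v : reach n u v -> dist u v <= n.
Proof.
move=> r; case: (leqP #|T| n) => [le|lt].
  exact: leq_trans (ltnW (dist_spec u v).2) le.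
rewrite leqNgt; apply/negP=> lt2; rewrite /Defs.dist in lt2.
by have := before_find 0 lt2; rewrite nth_iota // add0n r.
Qed.

Lemma dist_sym u v : dist u v = dist v u.
Proof.
by apply/eqP; rewrite eqn_leq !dist_le // reach_sym //; apply: (dist_spec _ _).1.
Qed.

Lemma dist_tri u w v : dist u v <= dist u w + dist w v.
Proof. apply: dist_le; apply: reach_trans; apply: (dist_spec _ _).1. Qed.

Lemma dist0 u : dist u u = 0.
Proof. by apply/eqP; rewrite -leqn0; apply: dist_le => /=. Qed.

Lemma dist_eq0 u v : dist u v = 0 -> u = v.
Proof. by move=> h; have := (dist_spec u v).1; rewrite h => /eqP. Qed.

Lemma dist_edge u v : e u v -> dist u v = 1.
Proof.
move=> h; apply/eqP; rewrite eqn_leq dist_le ?reach1 //=.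
rewrite lt0n; apply/negP=> /eqP/dist_eq0 ee; subst; by rewrite eirr in h.
Qed.

Lemma dist_step u v n : dist u v = n.+1 -> exists2 w, e u w & dist w v = n.
Proof.
move=> H; have r := (dist_spec u v).1; rewrite H /= in r.
case/orP: r => [r|/existsP [w /andP[h1 h2]]].
  by have := dist_le r; rewrite H ltnn.
exists w => //; apply/eqP; rewrite eqn_leq dist_le //=.
have := dist_tri u w v; rewrite H dist_edge //.
Qed.

Lemma edge_near u v x : e u v -> dist u x <= (dist v x).+1 /\ dist v x <= (dist u x).+1.
Proof.
move=> h; have := dist_tri u v x; have := dist_tri v u x.
have h2 : e v u by rewrite esym.
rewrite (dist_edge h) (dist_edge h2); lia.
Qed.

Lemma slice_exists x y k : k <= dist x y ->
  exists c, dist x c = k /\ dist c y = dist x y - k.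
Proof.
elim: k => [|k IH] hk; first by exists x; rewrite dist0 subn0.
have [c [h1 h2]] := IH (ltnW hk).
have : dist c y = (dist x y - k.+1).+1 by lia.
move/dist_step=> [c' ec hc']; exists c'; split=> //.
have := dist_tri x c c'; have := dist_tri x c' y; rewrite (dist_edge ec); lia.
Qed.

Variable i : nat.
Hypothesis alpha : alpha_metric e i.

Lemma alphaE u v w x : dist u v + dist v w = dist u w ->
  dist v w + dist w x = dist v x -> e v w -> dist u v + dist v x <= dist u x + i.
Proof. by move=> h1 h2 h3; apply: (alpha (w:=w)) => //; rewrite /Defs.interval inE; apply/eqP. Qed.

Ltac symp a b := let h := fresh "S" in have h := dist_sym a b.

Lemma part1_core x y v k d : forall c, dist v c <= d -> dist x c = k ->
  dist x c + dist c y = dist x y -> exists c', [/\ dist x c' = k,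
   dist x c' + dist c' y = dist x y &
   dist v c' + minn k (dist x y - k) <= maxn (dist v x) (dist v y) + i].
Proof.
elim: d => [|d IH] c hd hk hi.
  have hvc : v = c by apply: dist_eq0; lia.
  subst v; exists c; split=> //; rewrite dist0; symp c x; symp c y; lia.
case: (leqP (dist v c) d) => [hd'|hd']; first exact: IH hd' hk hi.
symp c v.
have : dist c v = d.+1 by lia.
move/dist_step=> [c' ec hc'].
have [nx1 nx2] := edge_near x ec.
have [ny1 ny2] := edge_near y ec.
have t1 := dist_tri x c' y.
have e1 := dist_edge ec.
symp c x; symp c' x; symp c y; symp c' y; symp v x; symp v y; symp v c'.
case: (leqP (dist x c') k) => [ax|ax].
  case: (leqP (dist c' y) (dist x y - k)) => [ay|ay].
    apply: (IH c'); lia.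
  have := @alphaE y c c' v; rewrite e1 => A.
  have B := A ltac:(lia) ltac:(lia) ec.
  by exists c; split => //; lia.
have := @alphaE x c c' v; rewrite e1 => A.
have B := A ltac:(lia) ltac:(lia) ec.
by exists c; split => //; lia.
Qed.

Lemma thin x y j : forall k u w, k + j = dist x y ->
  dist x u = k -> dist x u + dist u y = dist x y ->
  dist x w = k -> dist x w + dist w y = dist x y -> dist u w <= i.+1.
Proof.
elim: j => [|j IH] k u w hD hu hu' hw hw'.
  have := @dist_eq0 u y ltac:(lia); have := @dist_eq0 w y ltac:(lia).
  by move=> -> ->; rewrite dist0.
case: (leqP (dist u w) i.+1) => // ht.
have [q eq hq] := @dist_step u y j ltac:(lia).
have [w2 ew hw2] := @dist_step w y j ltac:(lia).
have [a1 a2] := edge_near x eq.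
have [b1 b2] := edge_near x ew.
have t1 := dist_tri x q y; have t2 := dist_tri x w2 y.
have [c1 c2] := edge_near w eq.
have [d1 d2] := edge_near q ew.
have e1 := dist_edge eq; have e2 := dist_edge ew.
symp u x; symp q x; symp w x; symp w2 x; symp u w; symp q w; symp w2 q;
  symp w w2; symp u q.
have Hq : dist x q = k.+1 by lia.
have Hw2 : dist x w2 = k.+1 by lia.
case: (ltngtP (dist q w) (dist u w)) => Cqw.
- have := @alphaE x u q w; rewrite e1 => A.
  have := A ltac:(lia) ltac:(lia) eq; lia.
- have := @alphaE w u q y; rewrite e1 => A.
  have := A ltac:(lia) ltac:(lia) eq; lia.
case: (ltngtP (dist q w2) (dist u w)) => Cqw2.
- have := @alphaE x w w2 q; rewrite e2 => A.
  have := A ltac:(lia) ltac:(lia) ew; lia.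
- have := @alphaE q w w2 y; rewrite e2 => A.
  have := A ltac:(lia) ltac:(lia) ew; lia.
have := IH k.+1 q w2 ltac:(lia) Hq ltac:(lia) Hw2 ltac:(lia); lia.
Qed.

Lemma main_sec :
  (forall (x y v : T) (k : nat), k <= dist x y ->
     exists2 c, c \in slice e k x y &
       dist v c + minn (dist x c) (dist y c)
         <= maxn (dist v x) (dist v y) + i
       /\ 2 * dist v c <= 2 * maxn (dist v x) (dist v y) + i)
  /\
  (forall x y v z : T, z \in interval e x y ->
       dist z v + minn (dist x z) (dist y z)
         <= maxn (dist x v) (dist y v) + 2 * i + 1
    /\ 2 * dist z v <= 2 * maxn (dist x v) (dist y v) + 3 * i + 2)
  /\
  (forall x y v z : T, z \in interval e x y -> v \in farthest e z ->
       ecc e z + minn (dist x z) (dist y z)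
         <= maxn (ecc e x) (ecc e y) + 2 * i + 1
    /\ 2 * ecc e z <= 2 * maxn (ecc e x) (ecc e y) + 3 * i + 2).
Proof.
have P1 : forall (x y v : T) (k : nat), k <= dist x y ->
     exists2 c, c \in slice e k x y &
       dist v c + minn (dist x c) (dist y c)
         <= maxn (dist v x) (dist v y) + i
       /\ 2 * dist v c <= 2 * maxn (dist v x) (dist v y) + i.
  move=> x y v k hk.
  have [c0 [h1 h2]] := slice_exists hk.
  have [c [hc1 hc2 hc3]] := part1_core (x:=x) (y:=y) (v:=v) (leqnn _) h1 ltac:(symp c0 y; lia).
  exists c; first by rewrite /Defs.slice /Defs.interval !inE hc2 eqxx hc1 eqxx.
  have := dist_tri v x c; have := dist_tri v y c.
  symp y c; lia.
have P2 : forall x y v z : T, z \in interval e x y ->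
       dist z v + minn (dist x z) (dist y z)
         <= maxn (dist x v) (dist y v) + 2 * i + 1
    /\ 2 * dist z v <= 2 * maxn (dist x v) (dist y v) + 3 * i + 2.
  move=> x y v z; rewrite /Defs.interval inE => /eqP hz.
  have [c] := P1 x y v (dist x z) ltac:(lia).
  rewrite /Defs.slice /Defs.interval !inE => /andP [/eqP hc1 /eqP hc2] [A B].
  have Hth := @thin x y (dist x y - dist x z) (dist x z) z c ltac:(lia) erefl hz hc2 hc1.
  have := dist_tri z c v.
  symp z v; symp c v; symp y c; symp y z; symp z c; symp x v; symp y v; lia.
split=> //; split=> // x y v z hz.
rewrite /Defs.farthest inE => /eqP hv.
have [A B] := P2 x y v z hz.
have ex : dist x v <= ecc e x by rewrite dist_sym /Defs.ecc; apply: leq_bigmax.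
have ey : dist y v <= ecc e y by rewrite dist_sym /Defs.ecc; apply: leq_bigmax.
rewrite dist_sym hv in A B; lia.
Qed.

End G.
Unset Implicit Arguments.

Theorem lemma4 (T : finType) (e : rel T) (i : nat) :
  simple_graph e -> connected_graph e -> alpha_metric e i ->
  (forall (x y v : T) (k : nat), k <= dist e x y ->
     exists2 c, c \in slice e k x y &
       dist e v c + minn (dist e x c) (dist e y c)
         <= maxn (dist e v x) (dist e v y) + i
       /\ 2 * dist e v c <= 2 * maxn (dist e v x) (dist e v y) + i)
  /\
  (forall x y v z : T, z \in interval e x y ->
       dist e z v + minn (dist e x z) (dist e y z)
         <= maxn (dist e x v) (dist e y v) + 2 * i + 1
    /\ 2 * dist e z v <= 2 * maxn (dist e x v) (dist e y v) + 3 * i + 2)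
  /\
  (forall x y v z : T, z \in interval e x y -> v \in farthest e z ->
       ecc e z + minn (dist e x z) (dist e y z)
         <= maxn (ecc e x) (ecc e y) + 2 * i + 1
    /\ 2 * ecc e z <= 2 * maxn (ecc e x) (ecc e y) + 3 * i + 2).
Proof.
move=> [esym eirr] conn alpha; exact: main_sec.
Qed.
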